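(* Let $\mu,w,w'\in\mathbb{R}^d$ and $\sigma_1,\dots,\sigma_d>0$, and let $P=N(\mu,\mathrm{diag}(\sigma_1^2,\dots,\sigma_d^2))$. Consider affine flows of the diagonal form $w_i\mapsto a_iw_i+b_i$ ($i=1,\dots,d$) with $a_i\neq 0$, and the problem of minimizing $D_{\mathrm{KL}}[P'\,\|\,P]$ over $(a_1,\dots,a_d,b_1,\dots,b_d)$, where $P'$ is the push-forward of $P$ under this flow, subject to the constraint $w_i'=a_iw_i+b_i$ for all $i$. Put $u_i=(w_i-\mu_i)/\sigma_i$ and $v_i=(w_i'-\mu_i)/\sigma_i$. Then the optimal transformation is given by $$a_i^\ast=\frac{u_iv_i+\delta_i\sqrt{4+u_i^2(4+v_i^2)}}{2(1+u_i^2)}$$ for some $\delta_i\in\{-1,+1\}$, and the posterior hyperparameters (the mean $\mu_i'$ and standard deviation $\sigma_i'$ of the $i$-th component of $P'$) are $$\sigma_i'=a_i^\ast\sigma_i,\qquad \mu_i'=a_i^\ast(\mu_i-w_i)+w_i'.$$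
   Context: $\mathrm{diag}(\cdot)$ denotes a diagonal matrix; subscripts $i$ denote vector components. The push-forward of $N(\mu,\mathrm{diag}(\sigma_i^2))$ under $w_i\mapsto a_iw_i+b_i$ is the Gaussian with independent components of mean $a_i\mu_i+b_i$ and variance $a_i^2\sigma_i^2$. $D_{\mathrm{KL}}$ is the Kullback–Leibler divergence. *)

(* Defs.v *)
From HB Require Import structures.
From mathcomp Require Import all_boot all_order all_algebra.
From mathcomp Require Import all_classical all_reals all_analysis.
Set Implicit Arguments. Unset Strict Implicit. Unset Printing Implicit Defensive.
Import Order.TTheory GRing.Theory Num.Theory.
Local Open Scope ring_scope.

Definition KL_normal1 {R : realType} (m' s' m s : R) : \bar R :=
  (\int[@lebesgue_measure R]_x
     (normal_pdf m' s' x * ln (normal_pdf m' s' x / normal_pdf m s x))%:E)%E.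

(* D_KL between two Gaussians on R^d with diagonal covariances
   (independent components): the sum of the componentwise divergences. *)
Definition KL_diag_normal {R : realType} (d : nat) (m' s' m s : 'I_d -> R)
  : \bar R :=
  (\sum_(i < d) KL_normal1 (m' i) (s' i) (m i) (s i))%E.

(* Objective: D_KL[P' || P] where P = N(mu, diag(sigma_i^2)) and P' is the
   push-forward of P under w_i |-> a_i w_i + b_i, i.e. the Gaussian with
   independent components of mean a_i mu_i + b_i and variance a_i^2 sigma_i^2
   (normal_pdf only depends on the square of its scale parameter). *)
Definition flow_KL {R : realType} (d : nat) (mu sigma a b : 'I_d -> R)
  : \bar R :=
  KL_diag_normal (fun i => a i * mu i + b i) (fun i => a i * sigma i) mu sigma.

Definition admissible {R : realType} (d : nat) (w w' a b : 'I_d -> R) : Prop :=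
  forall i, a i != 0 /\ w' i = a i * w i + b i.

Definition optimal_flow {R : realType} (d : nat) (mu sigma w w' a b : 'I_d -> R)
  : Prop :=
  admissible w w' a b /\
  forall a' b', admissible w w' a' b' ->
    (flow_KL mu sigma a b <= flow_KL mu sigma a' b')%E.

(* Main.v *)
Require Import Defs.
From HB Require Import structures.
From mathcomp Require Import all_boot all_order all_algebra.
From mathcomp Require Import all_classical all_reals all_analysis.
From mathcomp Require Import measurable_realfun.
Import Order.TTheory GRing.Theory Num.Theory.
Import numFieldNormedType.Exports.
From mathcomp Require Import ring lra.
Local Open Scope ring_scope.
Local Open Scope classical_set_scope.

Section aff.
Context {R : realType} (c e : R).
Definition affR (y : measurableTypeR R) : measurableTypeR R := c * y + e.
Lemma measurable_affR : measurable_fun [set: R] affR.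
Proof. by apply: measurable_funD => //; exact: measurable_funM. Qed.
Definition affpush : set (measurableTypeR R) -> \bar R := pushforward (@lebesgue_measure R) affR.
Let ap0 : affpush set0 = 0%E. Proof. by rewrite /affpush /pushforward preimage_set0 measure0. Qed.
Let ap_ge0 A : (0 <= affpush A)%E.
Proof. rewrite /affpush /pushforward; exact: measure_ge0. Qed.
Let ap_sa : semi_sigma_additive affpush.
Proof.
move=> F mF tF mUF; rewrite /affpush /pushforward preimage_bigcup.
apply: measure_semi_sigma_additive.
- by move=> n; rewrite -[X in measurable X]setTI; exact: measurable_affR.
- apply/trivIsetP => /= i j _ _ ij; rewrite -preimage_setI.
  by move/trivIsetP : tF => /(_ _ _ _ _ ij) ->//; rewrite preimage_set0.
- by rewrite -preimage_bigcup -[X in measurable X]setTI; exact: measurable_affR.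
Qed.
HB.instance Definition _ := isMeasure.Build _ _ _ affpush ap0 ap_ge0 ap_sa.
End aff.

Lemma affpush_itv {R : realType} (c e : R) (c0 : c != 0) (a b : R) :
  (`|c|%:E * affpush c e `]a, b]%classic = lebesgue_measure `]a, b]%classic)%E.
Proof.
rewrite /affpush /pushforward /affR.
have [cp|cn] := ltrP 0 c.
  rewrite (_ : _ @^-1` _ = `](a - e) / c, (b - e) / c]%classic); last first.
    apply/seteqP; split => y /=; rewrite !in_itv /=.
      by move=> /andP[h1 h2]; rewrite ltr_pdivrMr // ler_pdivlMr // mulrC ltrBlDr lerBrDr h1 h2.
    by rewrite ltr_pdivrMr // ler_pdivlMr // mulrC ltrBlDr lerBrDr.
  rewrite !lebesgue_measure_itv /= !lte_fin ltr_pM2r ?invr_gt0 // ltrD2r.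
  case: ifP => ab; last by rewrite mule0.
  rewrite -EFinB -EFinM gtr0_norm //; congr EFin.
  by field; rewrite gt_eqF.
have cn' : c < 0 by rewrite lt_neqAle c0 cn.
rewrite (_ : _ @^-1` _ = `[(b - e) / c, (a - e) / c[%classic); last first.
  apply/seteqP; split => y /=; rewrite !in_itv /=.
    move=> /andP[h1 h2]; rewrite ltr_ndivlMr // ler_ndivrMr //.
    by rewrite mulrC; apply/andP; split; lra.
  rewrite ltr_ndivlMr // ler_ndivrMr // => /andP[h1 h2].
  by rewrite mulrC in h1 h2; apply/andP; split; lra.
rewrite !lebesgue_measure_itv /= !lte_fin ltr_nM2r ?invr_lt0 // ltrD2r.
case: ifP => ab; last by rewrite mule0.
rewrite -EFinB -EFinM ltr0_norm //; congr EFin.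
by field; rewrite lt_eqF.
Qed.

Lemma CV {R : realType} (c e : R) (c0 : c != 0) (f : R -> \bar R)
  (mf : measurable_fun setT f) (f0 : forall x, (0 <= f x)%E) :
  (\int[lebesgue_measure]_x f x = `|c|%:E * \int[lebesgue_measure]_y f (c * y + e)%R)%E.
Proof.
pose k : {nonneg R} := NngNum (normr_ge0 c).
have E : forall A, measurable A -> lebesgue_measure A = mscale k (affpush c e) A.
  move=> A mA; apply: (@lebesgue_measure_unique R (mscale k (affpush c e))) => // _ [[a b]] _ <-.
  by rewrite /mscale /=; exact/esym/affpush_itv.
rewrite (eq_measure_integral (mscale k (affpush c e))); last by move=> A mA _; exact: E.
rewrite ge0_integral_mscale //=.
by rewrite /affpush ge0_integral_pushforward //=; last exact: measurable_affR.
Qed.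

Lemma CVs {R : realType} (c e : R) (c0 : c != 0) (f : R -> \bar R)
  (mf : measurable_fun setT f)
  (intf : (@lebesgue_measure R).-integrable setT (fun y => f (c * y + e)%R)) :
  (\int[lebesgue_measure]_x f x = `|c|%:E * \int[lebesgue_measure]_y f (c * y + e)%R)%E.
Proof.
rewrite integralE [in RHS]integralE.
rewrite (@CV R c e c0 _ (measurable_funepos mf)); last by move=> x; exact: funepos_ge0.
rewrite (@CV R c e c0 _ (measurable_funeneg mf)); last by move=> x; exact: funeneg_ge0.
have Ep : (\int[lebesgue_measure]_y (fun y => f (c * y + e)%R)^\+ y =
   \int[lebesgue_measure]_y f^\+ (c * y + e)%R)%E.
  by apply: eq_integral => y _; rewrite !funeposE.
have En : (\int[lebesgue_measure]_y (fun y => f (c * y + e)%R)^\- y =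
   \int[lebesgue_measure]_y f^\- (c * y + e)%R)%E.
  by apply: eq_integral => y _; rewrite !funenegE.
rewrite Ep En -muleBr //.
by rewrite -Ep -En; exact: (integrable_add_def _ intf).
Qed.

Section stdnormal.
Context {R : realType}.
Local Notation mu := (@lebesgue_measure R).

Lemma npdfE (m s x : R) : s != 0 -> normal_pdf m s x = normal_peak s * normal_fun m s x.
Proof. by move=> s0; rewrite /normal_pdf (negbTE s0). Qed.

Lemma peak_scale (s : R) : s != 0 -> normal_peak s = normal_peak 1 / `|s|.
Proof.
move=> s0; rewrite /normal_peak.
have -> : s ^+ 2 * pi *+ 2 = s ^+ 2 * (1 ^+ 2 * pi *+ 2) by rewrite expr1n mul1r mulrnAr.
by rewrite sqrtrM ?sqr_ge0 // sqrtr_sqr invfM mulrC.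
Qed.

Lemma npdf_scale (m s y : R) : s != 0 ->
  normal_pdf m s (s * y + m) = normal_pdf 0 1 y / `|s|.
Proof.
move=> s0; rewrite !npdfE ?oner_neq0 // peak_scale // /normal_fun.
rewrite mulrAC; congr (_ * _ * _); congr expR.
by rewrite addrK subr0; field.
Qed.

Lemma peak_gt0 (s : R) : s != 0 -> 0 < normal_peak s.
Proof. exact: normal_peak_gt0. Qed.

Lemma npdf_gt0 (m s x : R) : s != 0 -> 0 < normal_pdf m s x.
Proof. by move=> s0; rewrite npdfE // mulr_gt0 ?peak_gt0 ?expR_gt0. Qed.

End stdnormal.

Section moments.
Context {R : realType}.
Local Notation mu := (@lebesgue_measure R).
Definition phi (y : R) := normal_pdf 0 1 y.

Lemma phiE y : phi y = normal_peak 1 * expR (- y ^+ 2 / 2).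
Proof. by rewrite /phi npdfE ?oner_neq0 // /normal_fun subr0 expr1n. Qed.

Lemma mphi : measurable_fun setT phi.
Proof. exact: measurable_normal_pdf. Qed.

Lemma int_phi : mu.-integrable setT (fun y => (phi y)%:E).
Proof. exact: integrable_normal_pdf. Qed.

Lemma phi_gt0 y : 0 < phi y.
Proof. by rewrite /phi npdf_gt0 ?oner_neq0. Qed.

Lemma y2phi_bound y :
  y ^+ 2 * phi y <= (8 / 3 * normal_peak 1 / normal_peak 2) * normal_pdf 0 2 y.
Proof.
have p1 := @peak_gt0 R 1 (oner_neq0 _).
have p2 : 0 < normal_peak (2 : R) by apply: peak_gt0; rewrite pnatr_eq0.
rewrite phiE npdfE ?pnatr_eq0 // /normal_fun subr0.
have -> : expR (- y ^+ 2 / (2 ^+ 2 *+ 2)) = expR (- y ^+ 2 / 2) * expR (3 * y ^+ 2 / 8).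
  by rewrite -expRD; congr expR; field.
have ge := expR_ge1Dx (3 * y ^+ 2 / 8).
have e1 := expR_gt0 (- y ^+ 2 / 2).
set E1 := expR (- y ^+ 2 / 2) in e1 *.
set E2 := expR (3 * y ^+ 2 / 8) in ge *.
have -> : 8 / 3 * normal_peak 1 / normal_peak 2 * (normal_peak 2 * (E1 * E2)) =
  8 / 3 * (normal_peak 1 * E1) * E2 by field; rewrite gt_eqF.
have h : 0 < normal_peak 1 * E1 by apply: mulr_gt0.
have := sqr_ge0 y; nra.
Qed.

Lemma int_y2phi : mu.-integrable setT (fun y => (y ^+ 2 * phi y)%:E).
Proof.
apply: (@le_integrable _ _ _ mu setT measurableT _
   (fun y => ((8 / 3 * normal_peak 1 / normal_peak 2) * normal_pdf 0 2 y)%:E)).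
- apply/measurable_EFinP; apply: measurable_funM.
    exact: exprn_measurable.
  exact: mphi.
- move=> y _; rewrite !abse_EFin lee_fin !ger0_norm.
  + exact: y2phi_bound.
  + apply: mulr_ge0; last exact: normal_pdf_ge0.
    apply: divr_ge0; last exact: normal_peak_ge0.
    by apply: mulr_ge0 => //; exact: normal_peak_ge0.
  + by apply: mulr_ge0; [exact: sqr_ge0|exact: ltW (phi_gt0 y)].
- exact: integrableZl (integrable_normal_pdf _ _).
Qed.

Lemma int_yphi : mu.-integrable setT (fun y => (y * phi y)%:E).
Proof.
apply: (@le_integrable _ _ _ mu setT measurableT _
   (fun y => (phi y + y ^+ 2 * phi y)%:E)).
- apply/measurable_EFinP; apply: measurable_funM => //; exact: mphi.
- move=> y _; rewrite !abse_EFin lee_fin normrM (gtr0_norm (phi_gt0 y)).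
  have p := phi_gt0 y.
  rewrite [X in _ <= X]ger0_norm; last by have := sqr_ge0 y; nra.
  have : `|y| <= 1 + y ^+ 2.
    rewrite -(real_normK (num_real y)).
    have := sqr_ge0 (`|y| - 1); have := normr_ge0 y; nra.
  nra.
- have h := integrableD measurableT int_phi int_y2phi.
  exact: h.
Qed.


Lemma myphi : measurable_fun setT (fun x : R => (x * phi x)%:E).
Proof. by apply/measurable_EFinP; apply: measurable_funM => //; exact: mphi. Qed.

Lemma phiN y : phi (- y) = phi y.
Proof. by rewrite !phiE sqrrN. Qed.

Lemma M1 : (\int[mu]_y (y * phi y)%:E = 0)%E.
Proof.
have fin : (\int[mu]_y (y * phi y)%:E)%E \is a fin_num.
  by apply: integrable_fin_num => //; exact: int_yphi.
have E : (\int[mu]_y (y * phi y)%:E = (-1)%:E * \int[mu]_y (y * phi y)%:E)%E.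
  rewrite {1}(@CVs R (-1) 0 _ (fun x => (x * phi x)%:E)) //.
  - rewrite normrN normr1 mul1e -integralZl //; last exact: int_yphi.
    by apply: eq_integral => y _; rewrite addr0 mulN1r phiN -EFinM mulN1r mulNr.
  - exact: myphi.
  - apply: (@eq_integrable _ _ _ mu setT measurableT (fun y => (-1)%:E * (y * phi y)%:E)%E).
      by move=> y _; rewrite addr0 mulN1r phiN -EFinM mulN1r mulNr.
    exact: (integrableZl measurableT (-1) int_yphi).
pose x := fine (\int[mu]_y (y * phi y)%:E)%E.
have hx : (\int[mu]_y (y * phi y)%:E)%E = x%:E by rewrite /x fineK.
rewrite hx -EFinM in E; rewrite hx.
have hE : x = -1 * x := EFin_inj E.
by congr EFin; lra.
Qed.

Lemma c_eq1 (c : R) :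
  (forall s, 0 < s -> 1 / s + (1 - 1 / s ^+ 2) / (2 * s) * c <= 1) -> c = 1.
Proof.
move=> H.
have H' : forall s, 0 < s -> (s ^+ 2 - 1) * c <= 2 * s ^+ 2 * (s - 1).
  move=> s s0; have := H s s0.
  have -> : 1 / s + (1 - 1 / s ^+ 2) / (2 * s) * c = (2 * s ^+ 2 + (s ^+ 2 - 1) * c) / (2 * s ^+ 3).
    by field; rewrite gt_eqF.
  rewrite ler_pdivrMr; last by rewrite mulr_gt0 // exprn_gt0.
  rewrite mul1r => h; have e : s ^+ 3 = s ^+ 2 * s by rewrite exprSr.
  rewrite e in h; nra.
apply/eqP; rewrite eq_le; apply/andP; split.
  rewrite leNgt; apply/negP => c1.
  set d := c - 1.
  have d0 : 0 < d by rewrite /d subr_gt0.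
  set t := d / (d + 3).
  have t0 : 0 < t by rewrite /t divr_gt0 //; lra.
  have td : t * (d + 3) = d by rewrite /t divfK //; rewrite gt_eqF //; lra.
  have t1 : t < 1.
    by rewrite /t ltr_pdivrMr; lra.
  have := H' (1 + t) ltac:(lra).
  have -> : c = 1 + d by rewrite /d; ring.
  nra.
rewrite leNgt; apply/negP => c1.
set d := 1 - c.
have d0 : 0 < d by rewrite /d subr_gt0.
set t := d / (d + 3).
have t0 : 0 < t by rewrite /t divr_gt0 //; lra.
have td : t * (d + 3) = d by rewrite /t divfK //; rewrite gt_eqF //; lra.
have t1 : t < 1.
  by rewrite /t ltr_pdivrMr; lra.
have := H' (1 - t) ltac:(lra).
have -> : c = 1 - d by rewrite /d; ring.
nra.
Qed.

Lemma npdf_lb (s y : R) : 0 < s ->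
  1 / s * phi y + (1 - 1 / s ^+ 2) / (2 * s) * (y ^+ 2 * phi y) <= normal_pdf 0 s y.
Proof.
move=> s0; have sn : s != 0 by rewrite gt_eqF.
rewrite npdfE // peak_scale // gtr0_norm // phiE /normal_fun subr0.
have -> : expR (- y ^+ 2 / (s ^+ 2 *+ 2)) =
    expR (- y ^+ 2 / 2) * expR (y ^+ 2 * (1 - 1 / s ^+ 2) / 2).
  by rewrite -expRD; congr expR; field.
have ge := expR_ge1Dx (y ^+ 2 * (1 - 1 / s ^+ 2) / 2).
have p1 := @peak_gt0 R 1 (oner_neq0 _).
have e1 := expR_gt0 (- y ^+ 2 / 2).
set E1 := expR (- y ^+ 2 / 2) in e1 *.
set E2 := expR (y ^+ 2 * (1 - 1 / s ^+ 2) / 2) in ge *.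
have hA : 0 < normal_peak 1 * E1 / s by apply: divr_gt0 => //; apply: mulr_gt0.
have -> : normal_peak 1 / s * (E1 * E2) = (normal_peak 1 * E1 / s) * E2 by field.
have -> : 1 / s * (normal_peak 1 * E1) +
   (1 - 1 / s ^+ 2) / (2 * s) * (y ^+ 2 * (normal_peak 1 * E1)) =
   (normal_peak 1 * E1 / s) * (1 + y ^+ 2 * (1 - 1 / s ^+ 2) / 2) by field.
by rewrite ler_pM2l.
Qed.

Lemma M2 : (\int[mu]_y (y ^+ 2 * phi y)%:E = 1)%E.
Proof.
have fin : (\int[mu]_y (y ^+ 2 * phi y)%:E)%E \is a fin_num.
  by apply: integrable_fin_num => //; exact: int_y2phi.
pose c := fine (\int[mu]_y (y ^+ 2 * phi y)%:E)%E.
have hc : (\int[mu]_y (y ^+ 2 * phi y)%:E)%E = c%:E by rewrite /c fineK.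
rewrite hc; congr EFin; apply: c_eq1 => s s0.
have h1 : (\int[mu]_y (normal_pdf 0 s y)%:E = 1)%E by exact: integral_normal_pdf.
have iA : mu.-integrable setT (fun y => ((1 / s)%:E * (phi y)%:E)%E).
  exact: (integrableZl measurableT (1 / s) int_phi).
have iB : mu.-integrable setT
    (fun y => (((1 - 1 / s ^+ 2) / (2 * s))%:E * (y ^+ 2 * phi y)%:E)%E).
  exact: (integrableZl measurableT ((1 - 1 / s ^+ 2) / (2 * s)) int_y2phi).
have le := @le_integral _ _ _ mu setT measurableT
  (fun y => ((1 / s)%:E * (phi y)%:E + ((1 - 1 / s ^+ 2) / (2 * s))%:E * (y ^+ 2 * phi y)%:E)%E)
  (fun y => (normal_pdf 0 s y)%:E) (integrableD measurableT iA iB) (integrable_normal_pdf _ _).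
rewrite h1 (integralD measurableT iA iB) in le.
rewrite (integralZl measurableT int_phi) (integralZl measurableT int_y2phi) in le.
rewrite hc (_ : (\int[mu]_y (phi y)%:E)%E = 1%E) in le; last exact: integral_normal_pdf.
rewrite mule1 -EFinM -EFinD lee_fin in le; apply: le => y _.
by rewrite -!EFinM -EFinD lee_fin; exact: npdf_lb.
Qed.

Definition Pf (al be ga y : R) := al + be * y + ga * y ^+ 2.

Lemma int_phiP al be ga : mu.-integrable setT (fun y => (phi y * Pf al be ga y)%:E).
Proof.
have iA := integrableZl measurableT al int_phi.
have iB := integrableZl measurableT be int_yphi.
have iC := integrableZl measurableT ga int_y2phi.
have h := integrableD measurableT (integrableD measurableT iA iB) iC.
apply: (@eq_integrable _ _ _ mu setT measurableT _ _ _ h) => y _.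
by rewrite /Pf /= -!EFinM -!EFinD; congr EFin; ring.
Qed.

Lemma int_phiPE al be ga : (\int[mu]_y (phi y * Pf al be ga y)%:E = (al + ga)%:E)%E.
Proof.
have iA := integrableZl measurableT al int_phi.
have iB := integrableZl measurableT be int_yphi.
have iC := integrableZl measurableT ga int_y2phi.
rewrite (_ : (fun y => (phi y * Pf al be ga y)%:E) =
   (fun y => (al%:E * (phi y)%:E + be%:E * (y * phi y)%:E) + ga%:E * (y ^+ 2 * phi y)%:E)%E);
  last by apply/funext => y; rewrite /Pf -!EFinM -!EFinD; congr EFin; ring.
rewrite (integralD measurableT (integrableD measurableT iA iB) iC).
rewrite (integralD measurableT iA iB).
rewrite (integralZl measurableT int_phi) (integralZl measurableT int_yphi).
rewrite (integralZl measurableT int_y2phi) M1 M2.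
rewrite (_ : (\int[mu]_y (phi y)%:E)%E = 1%E); last exact: integral_normal_pdf.
by rewrite !mule1 mule0 adde0 -EFinD.
Qed.

Lemma mPf al be ga (m s : R) : measurable_fun setT (fun x : R => Pf al be ga ((x - m) / s)).
Proof.
rewrite /Pf; apply: measurable_funD; first apply: measurable_funD => //.
- apply: measurable_funM => //; apply: measurable_funM => //.
  exact: measurable_funB.
- apply: measurable_funM => //; apply: measurable_funX.
  apply: measurable_funM => //; exact: measurable_funB.
Qed.

Lemma gauss_poly (m s al be ga : R) : s != 0 ->
  (\int[mu]_x (normal_pdf m s x * Pf al be ga ((x - m) / s))%:E = (al + ga)%:E)%E.
Proof.
move=> s0.
have E : forall y, normal_pdf m s (s * y + m) * Pf al be ga ((s * y + m - m) / s) =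
   `|s|^-1 * (phi y * Pf al be ga y).
  move=> y; rewrite npdf_scale // (_ : (s * y + m - m) / s = y); last by field.
  by rewrite /phi mulrAC mulrC.
rewrite (@CVs R s m s0 (fun x => (normal_pdf m s x * Pf al be ga ((x - m) / s))%:E)).
- under eq_integral do rewrite E EFinM.
  rewrite (integralZl measurableT (int_phiP al be ga)) muleA -EFinM.
  by rewrite divff ?normr_eq0 // mul1e int_phiPE.
- apply/measurable_EFinP; apply: measurable_funM.
    exact: measurable_normal_pdf.
  exact: mPf.
- apply: (@eq_integrable _ _ _ mu setT measurableT _ _ _
     (integrableZl measurableT (`|s|^-1) (int_phiP al be ga))) => y _.
  by rewrite /= E EFinM.
Qed.
End moments.


Section opt.
Context {R : realType}.
Variables u v : R.
Definition Gf (a : R) : R := - ln `|a| + ((v - a * u) ^+ 2 + a ^+ 2) / 2 - 1 / 2.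
Definition DD : R := 4 + u ^+ 2 * (4 + v ^+ 2).
Definition rr (delta : R) := (u * v + delta * Num.sqrt DD) / (2 * (1 + u ^+ 2)).

Let k_gt0 : 0 < 1 + u ^+ 2. Proof. have := sqr_ge0 u; lra. Qed.
Let D_gt0 : 0 < DD. Proof. rewrite /DD; have := sqr_ge0 u; have := sqr_ge0 v; nra. Qed.
Let sD : Num.sqrt DD ^+ 2 = DD. Proof. by rewrite sqr_sqrtr // ltW. Qed.
Let sD_gt : `|u * v| < Num.sqrt DD.
Proof.
rewrite -sqrtr_sqr ltr_sqrt //.
rewrite /DD; have := sqr_ge0 u; have := sqr_ge0 v; nra.
Qed.

Lemma rr_root delta : delta ^+ 2 = 1 ->
  (1 + u ^+ 2) * rr delta ^+ 2 - u * v * rr delta - 1 = 0.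
Proof.
move=> d2; have k0 : 1 + u ^+ 2 != 0 by rewrite gt_eqF.
have -> : (1 + u ^+ 2) * rr delta ^+ 2 - u * v * rr delta - 1 =
   (delta ^+ 2 * Num.sqrt DD ^+ 2 - (u * v) ^+ 2 - 4 * (1 + u ^+ 2)) / (4 * (1 + u ^+ 2)).
  by rewrite /rr; field.
by rewrite d2 sD /DD; apply/eqP; rewrite mulf_eq0; apply/orP; left; apply/eqP; ring.
Qed.

Lemma rr_pos : 0 < rr 1.
Proof.
rewrite /rr divr_gt0 //; last by have := k_gt0; lra.
have := sD_gt; have := ler_norm (- (u * v)); rewrite normrN; lra.
Qed.

Lemma rr_neg : rr (-1) < 0.
Proof.
rewrite /rr pmulr_llt0 ?invr_gt0; last by have := k_gt0; lra.
have := sD_gt; have := ler_norm (u * v); lra.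
Qed.

Lemma Gf_gap r a : (1 + u ^+ 2) * r ^+ 2 - u * v * r - 1 = 0 -> 0 < a * r ->
  (1 + u ^+ 2) * (a - r) ^+ 2 / 2 <= Gf a - Gf r.
Proof.
move=> hr ar.
have r0 : r != 0 by apply: contraTneq ar => ->; rewrite mulr0 ltxx.
have a0 : a != 0 by apply: contraTneq ar => ->; rewrite mul0r ltxx.
have r2 : 0 < r ^+ 2 by rewrite lt_neqAle sqr_ge0 andbT eq_sym sqrf_eq0.
have ar' : 0 < a / r.
  have -> : a / r = (a * r) / r ^+ 2 by field.
  exact: divr_gt0.
have hl : ln `|a| - ln `|r| <= a / r - 1.
  have -> : ln `|a| - ln `|r| = ln (a / r).
    rewrite -ln_div ?posrE ?normr_gt0 //; congr ln.
    by rewrite -normf_div gtr0_norm.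
  have := @le_ln1Dx R (a / r - 1); rewrite addrCA subrr addr0; apply; lra.
have ht : u * v = (1 + u ^+ 2) * r - r^-1.
  have h : u * v * r = (1 + u ^+ 2) * r ^+ 2 - 1 by lra.
  by apply: (mulIf r0); rewrite h; field.
have -> : Gf a - Gf r = (ln `|r| - ln `|a|) + ((1 + u ^+ 2) * (a ^+ 2 - r ^+ 2) / 2 - u * v * (a - r)).
  by rewrite /Gf; field.
rewrite ht.
have -> : (1 + u ^+ 2) * (a ^+ 2 - r ^+ 2) / 2 - ((1 + u ^+ 2) * r - r^-1) * (a - r) =
  (1 + u ^+ 2) * (a - r) ^+ 2 / 2 + (a / r - 1) by field.
lra.
Qed.

Lemma Gf_ge delta a : delta ^+ 2 = 1 -> 0 < a * rr delta -> Gf (rr delta) <= Gf a.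
Proof.
move=> d2 ar; have := @Gf_gap (rr delta) a (rr_root delta d2) ar.
have := k_gt0; have := sqr_ge0 (a - rr delta).
move=> h1 h2 h3; have : 0 <= (1 + u ^+ 2) * (a - rr delta) ^+ 2 / 2.
  by apply: divr_ge0 => //; apply: mulr_ge0 => //; lra.
lra.
Qed.

Lemma Gf_min_exists : exists a, a != 0 /\ forall a', a' != 0 -> Gf a <= Gf a'.
Proof.
have p := rr_pos; have n := rr_neg.
have d1 : (1 : R) ^+ 2 = 1 by rewrite expr1n.
have d2 : (-1 : R) ^+ 2 = 1 by rewrite sqrrN expr1n.
have [h|h] := lerP (Gf (rr 1)) (Gf (rr (-1))).
  exists (rr 1); split; first by rewrite gt_eqF.
  move=> a' a0; have [ap|an] := ltrP 0 a'.
    by apply: Gf_ge => //; apply: mulr_gt0.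
  have an' : a' < 0 by rewrite lt_neqAle a0 an.
  by apply: le_trans h _; apply: Gf_ge => //; nra.
exists (rr (-1)); split; first by rewrite lt_eqF.
move=> a' a0; have [ap|an] := ltrP 0 a'.
  by apply: le_trans (ltW h) _; apply: Gf_ge => //; apply: mulr_gt0.
have an' : a' < 0 by rewrite lt_neqAle a0 an.
by apply: Gf_ge => //; nra.
Qed.

Lemma Gf_min_char a : a != 0 -> (forall a', a' != 0 -> Gf a <= Gf a') ->
  exists delta : R, (delta = 1 \/ delta = -1) /\ a = rr delta.
Proof.
move=> a0 amin.
have p := rr_pos; have n := rr_neg.
have d1 : (1 : R) ^+ 2 = 1 by rewrite expr1n.
have d2 : (-1 : R) ^+ 2 = 1 by rewrite sqrrN expr1n.
have key : forall delta, delta ^+ 2 = 1 -> 0 < a * rr delta -> a = rr delta.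
  move=> delta dd ar.
  have g := @Gf_gap (rr delta) a (rr_root delta dd) ar.
  have r0 : rr delta != 0 by apply: contraTneq ar => ->; rewrite mulr0 ltxx.
  have m := amin (rr delta) r0.
  have h0 : (1 + u ^+ 2) * (a - rr delta) ^+ 2 / 2 <= 0 by lra.
  have h1 : (a - rr delta) ^+ 2 <= 0.
    have := k_gt0; have := sqr_ge0 (a - rr delta); nra.
  have : (a - rr delta) ^+ 2 == 0 by rewrite eq_le h1 sqr_ge0.
  by rewrite sqrf_eq0 subr_eq0 => /eqP.
have [ap|an] := ltrP 0 a.
  by exists 1; split; [left|apply: key => //; apply: mulr_gt0].
have an' : a < 0 by rewrite lt_neqAle a0 an.
by exists (-1); split; [right|apply: key => //; nra].
Qed.
End opt.

Lemma alg_id (R : realFieldType) (L z m' m s' s : R) : s' != 0 -> s != 0 ->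
  L + (- (s' * z) ^+ 2 / (s' ^+ 2 *+ 2) - - (s' * z + (m' - m)) ^+ 2 / (s ^+ 2 *+ 2)) =
  L + (m' - m) ^+ 2 / (2 * s ^+ 2) + s' * (m' - m) / s ^+ 2 * z +
  (s' ^+ 2 / (2 * s ^+ 2) - 1 / 2) * z ^+ 2.
Proof. move=> h1 h2. rewrite -[_ *+ 2]mulr_natr -[s ^+ 2 *+ 2]mulr_natr. field. by rewrite h1 h2. Qed.
Lemma t1 (R : realFieldType) (x m' s' : R) : s' != 0 -> x - m' = s' * ((x - m') / s').
Proof. by move=> h1; rewrite mulrC divfK. Qed.
Lemma t2 (R : realFieldType) (x m m' s' : R) : s' != 0 -> x - m = s' * ((x - m') / s') + (m' - m).
Proof. by move=> h1; rewrite -t1 // addrA subrK. Qed.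
Lemma alg_id2 (R : realFieldType) (L x m' m s' s : R) : s' != 0 -> s != 0 ->
 L + (- (x - m') ^+ 2 / (s' ^+ 2 *+ 2) - - (x - m) ^+ 2 / (s ^+ 2 *+ 2)) =
 L + (m' - m)^+2/(2*s^+2) + s'*(m'-m)/s^+2*((x-m')/s') + (s'^+2/(2*s^+2) - 1/2)*((x-m')/s')^+2.
Proof.
move=> h1 h2.
have := @alg_id R L ((x - m') / s') m' m s' s h1 h2.
by rewrite -(@t2 R x m m' s' h1) -(@t1 R x m' s' h1).
Qed.

Lemma alg_kl (R : realFieldType) (L a mu w w' sg : R) : sg != 0 ->
  L + (a * mu + (w' - a * w) - mu) ^+ 2 / (2 * sg ^+ 2) + ((a * sg) ^+ 2 / (2 * sg ^+ 2) - 1 / 2)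
  = L + (((w' - mu) / sg - a * ((w - mu) / sg)) ^+ 2 + a ^+ 2) / 2 - 1 / 2.
Proof. move=> h. field. exact: h. Qed.

Lemma alg_pk (R : realFieldType) (p x y : R) : p != 0 -> x != 0 -> y != 0 ->
  p / (x * y) / (p / y) = x^-1.
Proof. by move=> hp hx hy; field; rewrite hp hx hy. Qed.

Lemma alg_pk2 (R : realFieldType) (p x y : R) : x != 0 -> y != 0 ->
  p / y = x * (p / (x * y)).
Proof. by move=> hx hy; field; rewrite hx hy. Qed.

Section KL.
Context {R : realType}.

Lemma KL_formula (m' s' m s : R) : s' != 0 -> s != 0 ->
  KL_normal1 m' s' m s =
  (ln (normal_peak s' / normal_peak s) + (m' - m) ^+ 2 / (2 * s ^+ 2)
   + (s' ^+ 2 / (2 * s ^+ 2) - 1 / 2))%:E.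
Proof.
move=> s'0 s0; rewrite /KL_normal1.
have p' := peak_gt0 _ s'0; have p := peak_gt0 _ s0.
rewrite -(@gauss_poly R m' s' (ln (normal_peak s' / normal_peak s) + (m' - m) ^+ 2 / (2 * s ^+ 2))
   (s' * (m' - m) / s ^+ 2) (s' ^+ 2 / (2 * s ^+ 2) - 1 / 2)) //; last first.
apply: eq_integral => x _; congr EFin; congr (_ * _).
rewrite !npdfE // /normal_fun.
set A' := - (x - m') ^+ 2 / (s' ^+ 2 *+ 2).
set A := - (x - m) ^+ 2 / (s ^+ 2 *+ 2).
have -> : normal_peak s' * expR A' / (normal_peak s * expR A) =
    (normal_peak s' / normal_peak s) * expR (A' - A).
  rewrite expRB; field; rewrite ?gt_eqF ?expR_gt0 //.
rewrite lnM ?posrE ?expR_gt0 ?divr_gt0 // expRK /Pf /A' /A.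

exact: (@alg_id2 R _ x m' m s' s s'0 s0).
Qed.

Lemma KL_G (a b mu w w' sg : R) : a != 0 -> sg != 0 -> w' = a * w + b ->
  KL_normal1 (a * mu + b) (a * sg) mu sg = (Gf ((w - mu) / sg) ((w' - mu) / sg) a)%:E.
Proof.
move=> a0 s0 hw.
have hb : b = w' - a * w by rewrite hw; ring.
rewrite KL_formula ?mulf_neq0 //; congr EFin.
have p1 := @peak_gt0 R 1 (oner_neq0 _).
rewrite (@peak_scale R (a * sg)) ?mulf_neq0 // (@peak_scale R sg) // normrM.
have -> : normal_peak 1 / (`|a| * `|sg|) / (normal_peak 1 / `|sg|) = `|a|^-1.
  by apply: (@alg_pk R); rewrite ?normr_eq0 // gt_eqF.
rewrite lnV ?posrE ?normr_gt0 // hb /Gf.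
exact: alg_kl.
Qed.


Lemma push_normal (m s a b : R) (A : set R) : s != 0 -> a != 0 -> measurable A ->
  pushforward (normal_prob m s) (fun x => a * x + b) A = normal_prob (a * m + b) (a * s) A.
Proof.
move=> s0 a0 mA.
rewrite /pushforward /normal_prob integral_mkcond [RHS]integral_mkcond.
set f2 := ((fun x => (normal_pdf (a * m + b) (a * s) x)%:E) \_ A).
have mf2 : measurable_fun setT f2.
  apply/(measurable_restrictT _ mA); apply: measurable_funTS.
  by apply/measurable_EFinP; exact: measurable_normal_pdf.
have f20 : forall x, (0 <= f2 x)%E.
  by move=> x; rewrite /f2 /patch; case: ifP => _ //; rewrite lee_fin normal_pdf_ge0.
rewrite [RHS](@CV R a b a0 f2 mf2 f20).
rewrite -ge0_integralZl //.
- apply: eq_integral => y _; rewrite /f2 /patch.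
  have -> : (y \in (fun x => a * x + b) @^-1` A) = (a * y + b \in A) by [].
  case: ifPn => _; last by rewrite mule0.
  rewrite -EFinM; congr EFin.
  have e1 : a * y + b = (a * s) * ((y - m) / s) + (a * m + b) by field.
  have e2 : normal_pdf m s y = normal_pdf m s (s * ((y - m) / s) + m) by congr normal_pdf; field.
  rewrite e1 e2 (@npdf_scale R (a * m + b) (a * s)) ?mulf_neq0 //.
  rewrite (@npdf_scale R m s) // normrM.
  by apply: (@alg_pk2 R); rewrite normr_eq0.
- exact: (measurableT_comp mf2 (measurable_affR a b)).
Qed.
End KL.

Theorem mainTheorem2 (R : realType) (d : nat) (mu w w' sigma : 'I_d -> R)
    (hsigma : forall i, 0 < sigma i) :
  (exists a b, optimal_flow mu sigma w w' a b) /\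
  forall a b, optimal_flow mu sigma w w' a b ->
    forall i : 'I_d,
      let u := (w i - mu i) / sigma i in
      let v := (w' i - mu i) / sigma i in
      (exists delta : R, (delta = 1 \/ delta = -1) /\
         a i = (u * v + delta * Num.sqrt (4 + u ^+ 2 * (4 + v ^+ 2)))
               / (2 * (1 + u ^+ 2))) /\
      (forall A : set R, measurable A ->
         pushforward (normal_prob (mu i) (sigma i)) (fun x => a i * x + b i) A
         = normal_prob (a i * (mu i - w i) + w' i) (a i * sigma i) A).
Proof.
pose u i := (w i - mu i) / sigma i.
pose v i := (w' i - mu i) / sigma i.
have s0 : forall i, sigma i != 0 by move=> i; rewrite gt_eqF.
have KLE : forall a b, admissible w w' a b ->
    flow_KL mu sigma a b = (\sum_(i < d) Gf (u i) (v i) (a i))%:E.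
  move=> a b adm; rewrite /flow_KL /KL_diag_normal -sumEFin; apply: eq_bigr => i _.
  have [a0 hw] := adm i; exact: KL_G.
split.
  pose a i := proj1_sig (cid (Gf_min_exists (u i) (v i))).
  pose b i := w' i - a i * w i.
  have adm : admissible w w' a b.
    move=> i; split; last by rewrite /b addrC subrK.
    exact: (proj2_sig (cid (Gf_min_exists (u i) (v i)))).1.
  exists a, b; split; first exact: adm.
  move=> a' b' adm'.
  rewrite (KLE _ _ adm) (KLE _ _ adm') lee_fin; apply: ler_sum => i _.
  have [_ h] := proj2_sig (cid (Gf_min_exists (u i) (v i))).
  by apply: h; exact: (adm' i).1.
move=> a b [adm opt] i u' v'; rewrite {}/u' {}/v'.
have amin : forall a', a' != 0 -> Gf (u i) (v i) (a i) <= Gf (u i) (v i) a'.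
  move=> a' a'0.
  pose a2 j := if j == i then a' else a j.
  pose b2 j := w' j - a2 j * w j.
  have adm2 : admissible w w' a2 b2.
    move=> j; split; last by rewrite /b2 addrC subrK.
    by rewrite /a2; case: ifP => _; [exact: a'0|exact: (adm j).1].
  have := opt a2 b2 adm2; rewrite (KLE _ _ adm) (KLE _ _ adm2) lee_fin.
  rewrite (bigD1 i) //= [X in _ <= X -> _](bigD1 i) //=.
  have -> : \sum_(j < d | j != i) Gf (u j) (v j) (a2 j) =
            \sum_(j < d | j != i) Gf (u j) (v j) (a j).
    by apply: eq_bigr => j ji; rewrite /a2 (negbTE ji).
  by rewrite /a2 eqxx lerD2r.
have [delta [hd ha]] := Gf_min_char _ _ _ (adm i).1 amin.
split; first by exists delta; split.
move=> A mA; have [a0 hw] := adm i.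
rewrite push_normal //.
suff -> : a i * (mu i - w i) + w' i = a i * mu i + b i by [].
by rewrite hw; ring.
Qed.
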